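(* Let $n$ be even, and let $S_1$ and $S_2$ be two disjoint sets of cells of an $n\times n$ array, each of which forms a $2$-factor that is the union of two cycles of length $n$. Then for any positive integers $s,t,u,v$ with $s>t+n$, $t>u+n$ and $u>v+n$, the cells of $S_1\cup S_2$ can be filled with nonzero integers so that the resulting array is shiftable, has support $\{s+i,\ t+i,\ u+i,\ v+i\mid 1\le i\le n\}$ (each of these $4n$ absolute values occurring exactly once), and the four entries in each row and in each column sum to $0$.
   Context: Cells of an $n\times n$ array are identified with edges of $K_{n,n}$ (cell $(i,j)$ ↔ edge $\{a_i,b_j\}$). A set of cells forms a $2$-factor if the corresponding edges form a spanning $2$-regular subgraph of $K_{n,n}$; a cycle of length $n$ here means a cycle in $K_{n,n}$ with $n$ edges. The support of an array is the set of absolute values of its entries. An array is shiftable if each row and each column contains the same number of positive and negative entries. *)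

(* Defs.v *)
From HB Require Import structures.
From mathcomp Require Import all_boot all_order all_algebra.
Set Implicit Arguments. Unset Strict Implicit. Unset Printing Implicit Defensive.
Import Order.TTheory GRing.Theory Num.Theory.

(* Cells of an n x n array: pairs (row, column) in 'I_n * 'I_n, identified with
   edges {a_row, b_col} of K_{n,n}. *)
Definition cell n := ('I_n * 'I_n)%type.

Definition two_factor n (S : {set cell n}) : Prop :=
  (forall i : 'I_n, #|[set c in S | c.1 == i]| = 2) /\
  (forall j : 'I_n, #|[set c in S | c.2 == j]| = 2).

(* C is (the edge set of) a cycle of length len in K_{n,n}: there are m >= 2
   distinct rows r_0..r_{m-1} and distinct columns c_0..c_{m-1}, len = 2m, and
   C consists of the edges a_{r_i} b_{c_i} and b_{c_i} a_{r_{i+1 mod m}}. *)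
Definition is_cycle n (C : {set cell n}) (len : nat) : Prop :=
  exists m (r c : 'I_m -> 'I_n),
    [/\ 2 <= m, len = 2 * m, injective r, injective c &
        C = [set (r i, c i) | i : 'I_m] :|: [set (r (ordS i), c i) | i : 'I_m]].

Definition two_factor_two_ncycles n (S : {set cell n}) : Prop :=
  two_factor S /\
  exists C1 C2 : {set cell n},
    [/\ is_cycle C1 n, is_cycle C2 n, [disjoint C1 & C2] & S = C1 :|: C2].

(* Arrays: n x n integer matrices; a cell is empty iff its entry is 0
   (filled cells carry nonzero integers). *)
Definition shiftable n (A : 'M[int]_n) : Prop :=
  (forall i : 'I_n, #|[set j | 0 < A i j]%R| = #|[set j | A i j < 0]%R|) /\
  (forall j : 'I_n, #|[set i | 0 < A i j]%R| = #|[set i | A i j < 0]%R|).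

Definition abs_entries n (A : 'M[int]_n) (S : {set cell n}) : seq nat :=
  [seq absz (A c.1 c.2) | c <- enum S].

Definition block (x n : nat) : seq nat := [seq x + i | i <- iota 1 n].

(* Main.v *)
Require Import Defs.
From HB Require Import structures.
From mathcomp Require Import all_boot all_order all_algebra.
Import Order.TTheory GRing.Theory Num.Theory.
From mathcomp Require Import zify.
Set Implicit Arguments. Unset Strict Implicit. Unset Printing Implicit Defensive.

Definition mkA n (Y : finType) (E : Y -> cell n) (w : Y -> int) : 'M[int]_n :=
  (\matrix_(i, j) \sum_(y | E y == (i, j)) w y)%R.

Lemma mkA_E n (Y : finType) (E : Y -> cell n) (w : Y -> int) :
  injective E -> forall y, mkA E w (E y).1 (E y).2 = w y.
Proof.
move=> Ei y; rewrite mxE (big_pred1 y) //= => z.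
by rewrite -surjective_pairing; apply/eqP/eqP => [/Ei|->].
Qed.

Lemma mkA_0 n (Y : finType) (E : Y -> cell n) (w : Y -> int) i j :
  (forall y, E y != (i, j)) -> mkA E w i j = 0%R.
Proof. by move=> H; rewrite mxE big_pred0 // => y; rewrite (negbTE (H y)). Qed.

Lemma mkA_row n (Y : finType) (E : Y -> cell n) (w : Y -> int) i :
  (\sum_(j < n) mkA E w i j = \sum_(y | (E y).1 == i) w y)%R.
Proof.
under eq_bigr do rewrite mxE big_mkcond.
rewrite exchange_big [RHS]big_mkcond /=; apply: eq_bigr => y _.
case: (E y) => a b /=; case: eqP => [->|ne].
  rewrite (bigD1 b) //= eqxx big1 ?addr0 // => j /negbTE nj.
  by rewrite xpair_eqE eqxx /= eq_sym nj.
by rewrite big1 // => j _; rewrite xpair_eqE; case: eqP.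
Qed.

Lemma mkA_col n (Y : finType) (E : Y -> cell n) (w : Y -> int) j :
  (\sum_(i < n) mkA E w i j = \sum_(y | (E y).2 == j) w y)%R.
Proof.
under eq_bigr do rewrite mxE big_mkcond.
rewrite exchange_big [RHS]big_mkcond /=; apply: eq_bigr => y _.
case: (E y) => a b /=; case: eqP => [->|ne].
  rewrite (bigD1 a) //= eqxx big1 ?addr0 // => i /negbTE ni.
  by rewrite xpair_eqE eq_sym ni.
by rewrite big1 // => i _; rewrite xpair_eqE; case: eqP; case: eqP.
Qed.

Lemma mkA_cases n (Y : finType) (E : Y -> cell n) (w : Y -> int) i j :
  injective E ->
  (exists2 y, E y = (i, j) & mkA E w i j = w y) \/
  ((forall y, E y != (i, j)) /\ mkA E w i j = 0%R).
Proof.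
move=> Ei; case: (pickP (fun y => E y == (i, j))) => [y /eqP Ey|H].
  by left; exists y => //; have := mkA_E w Ei y; rewrite Ey.
by right; split=> [y|]; [rewrite H | apply: mkA_0 => y; rewrite H].
Qed.

Lemma mkA_card_row n (Y : finType) (E : Y -> cell n) (w : Y -> int)
   (P : pred int) i :
  injective E -> ~~ P 0%R ->
  #|[set j | P (mkA E w i j)]| = #|[set y | ((E y).1 == i) && P (w y)]|.
Proof.
move=> Ei P0.
have -> : [set j | P (mkA E w i j)] =
   [set (E y).2 | y in [set y | ((E y).1 == i) && P (w y)]].
  apply/setP => j; rewrite inE; apply/idP/imsetP.
    case: (mkA_cases w i j Ei) => [[y Ey ->] Py | [_ ->]]; last by rewrite (negbTE P0).
    by exists y; rewrite ?inE Ey //= eqxx.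
  case=> y; rewrite inE => /andP[/eqP Hi Hp] ->.
  by rewrite -Hi mkA_E.
apply: card_in_imset => y z; rewrite !inE => /andP[/eqP Hy _] /andP[/eqP Hz _] H2.
by apply: Ei; rewrite [E y]surjective_pairing [E z]surjective_pairing Hy Hz H2.
Qed.

Lemma mkA_card_col n (Y : finType) (E : Y -> cell n) (w : Y -> int)
   (P : pred int) j :
  injective E -> ~~ P 0%R ->
  #|[set i | P (mkA E w i j)]| = #|[set y | ((E y).2 == j) && P (w y)]|.
Proof.
move=> Ei P0.
have -> : [set i | P (mkA E w i j)] =
   [set (E y).1 | y in [set y | ((E y).2 == j) && P (w y)]].
  apply/setP => i; rewrite inE; apply/idP/imsetP.
    case: (mkA_cases w i j Ei) => [[y Ey ->] Py | [_ ->]]; last by rewrite (negbTE P0).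
    by exists y; rewrite ?inE Ey //= eqxx.
  case=> y; rewrite inE => /andP[/eqP Hj Hp] ->.
  by rewrite -Hj mkA_E.
apply: card_in_imset => y z; rewrite !inE => /andP[/eqP Hy _] /andP[/eqP Hz _] H2.
by apply: Ei; rewrite [E y]surjective_pairing [E z]surjective_pairing Hy Hz H2.
Qed.

Lemma mkA_abs n (Y : finType) (E : Y -> cell n) (w : Y -> int) :
  injective E ->
  perm_eq (abs_entries (mkA E w) [set E y | y : Y]) [seq absz (w y) | y <- enum Y].
Proof.
move=> Ei; rewrite /abs_entries.
have -> : [seq absz (w y) | y <- enum Y] =
          [seq absz (mkA E w c.1 c.2) | c <- map E (enum Y)].
  by rewrite -[RHS]map_comp; apply: eq_map => y /=; rewrite mkA_E.
apply: perm_map; apply: uniq_perm; first exact: enum_uniq.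
  by rewrite map_inj_uniq ?enum_uniq.
move=> c; rewrite mem_enum; apply/imsetP/mapP => [[y _ ->]|[y _ ->]];
  by exists y; rewrite ?mem_enum.
Qed.
Lemma sum_pair (R : Type) (idx : R) (op : Monoid.com_law idx) (A B : finType)
  (F : A * B -> R) : \big[op/idx]_p F p = \big[op/idx]_a \big[op/idx]_b F (a, b).
Proof. by rewrite pair_bigA; apply: eq_bigr => -[a b]. Qed.

Lemma mod2 (a m : nat) : a < 2 * m -> a %% m = if a < m then a else a - m.
Proof.
move=> h; case: ifP => h2; first by rewrite modn_small.
have -> : a = (a - m) + m by lia.
rewrite modnDr modn_small; lia.
Qed.

Definition jj m (k i : 'I_m) : nat := (i + m - k) %% m.

Lemma jj_lt m (k i : 'I_m) : jj k i < m.
Proof. rewrite /jj ltn_mod; case: m k i => [[]|] //. Qed.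

Lemma jj_val m (k i : 'I_m) : jj k i = if k <= i then i - k else i + m - k.
Proof.
have hi := ltn_ord i; have hk := ltn_ord k.
rewrite /jj mod2; last lia.
case: ifP => h1; case: ifP => h2; lia.
Qed.

Lemma ord_pred_val m (i : 'I_m) : (ord_pred i : nat) = if i == 0 :> nat then m - 1 else i - 1.
Proof.
have hi := ltn_ord i; rewrite /= mod2; last lia.
case: ifP => h1; case: ifP => h2; move: h2 => /eqP h2; lia.
Qed.

Lemma ordS_val m (i : 'I_m) : (ordS i : nat) = if i.+1 == m then 0 else i.+1.
Proof.
have hi := ltn_ord i; rewrite /= mod2; last lia.
case: ifP => h1; case: ifP => h2; move: h2 => /eqP h2; lia.
Qed.

Lemma jj_pred m (k i : 'I_m) :
  jj k i = if i == k then 0 else jj k (ord_pred i) + 1.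
Proof.
have hi := ltn_ord i; have hk := ltn_ord k.
case: eqP => [->|ne]; first by rewrite jj_val leqnn subnn.
have ne' : (i : nat) <> k by move=> h; apply: ne; apply: val_inj.
rewrite !jj_val ord_pred_val; case: (i =P 0 :> nat) => i0;
by repeat (case: ifP => ?); lia.
Qed.

Lemma jj_predk m (k : 'I_m) : 0 < m -> jj k (ord_pred k) = m - 1.
Proof.
move=> m0; have hk := ltn_ord k.
rewrite jj_val ord_pred_val; case: (k =P 0 :> nat) => i0;
by repeat (case: ifP => ?); lia.
Qed.

Lemma jj_inj m (k : 'I_m) : injective (jj k).
Proof.
move=> i i'; have hi := ltn_ord i; have hi' := ltn_ord i'; have hk := ltn_ord k.
rewrite !jj_val => h; apply: val_inj => /=; move: h.
case: ifP => h1; case: ifP => h2; lia.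
Qed.

Lemma ordS_neq m (i : 'I_m) : 1 < m -> ordS i != i.
Proof.
move=> m1; have hi := ltn_ord i; apply/eqP => /(congr1 (@nat_of_ord m)); rewrite ordS_val.
case: ifP => /eqP h; lia.
Qed.

Local Open Scope ring_scope.

Definition sg (b : bool) : int := (-1) ^+ b.

Lemma cyc_row m n (r : 'I_m -> 'I_n) (k : 'I_m) (o : nat) (sd : bool) i' : (0 < m)%N ->
  \sum_(b : bool) \sum_(x : 'I_m)
     (if r (if b then ordS x else x) == i' then sg (sd (+) b) * (o + (2 * jj k x + 1 + b))%N%:R else 0)
  = sg sd * ((\sum_(x : 'I_m) (r x == i' : nat))%N%:R - (2 * m * (r k == i'))%N%:R).
Proof.
move=> m0; rewrite big_bool /=.
rewrite (reindex_inj (@ord_pred_inj m)) /= -big_split /=.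
have -> : (2 * m * (r k == i'))%N = (\sum_(x : 'I_m) (2 * m * ((r x == i') && (x == k))))%N.
  rewrite (bigD1 k) //= eqxx andbT big1 ?addn0 // => x /negbTE ->; by rewrite andbF muln0.
rewrite !natr_sum -sumrB mulr_sumr; apply: eq_bigr => x _.
rewrite ord_predK; case: (r x == i'); last by rewrite andFb /= muln0 subr0 mulr0.
rewrite [jj k x]jj_pred andTb /sg; case: eqP => [->|_].
  rewrite jj_predk // addbT addbF.
  case: sd => /=; rewrite ?expr1 ?expr0; rewrite !natrD !natrM /=; lia.
case: sd => /=; rewrite ?expr1 ?expr0 ?muln0; lia.
Qed.

Lemma cyc_col m n (c : 'I_m -> 'I_n) (k : 'I_m) (o : nat) (sd : bool) j' :
  \sum_(b : bool) \sum_(x : 'I_m)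
     (if c x == j' then sg (sd (+) b) * (o + (2 * jj k x + 1 + b))%N%:R else 0)
  = - (sg sd * (\sum_(x : 'I_m) (c x == j' : nat))%N%:R).
Proof.
rewrite big_bool /= -big_split /= natr_sum mulr_sumr -sumrN; apply: eq_bigr => x _.
case: (c x == j'); last by rewrite /= !mulr0 oppr0 addr0.
rewrite /sg; case: sd => /=; rewrite ?expr1 ?expr0; lia.
Qed.

Lemma cyc_cnt_row m n (r : 'I_m -> 'I_n) (sd p : bool) i' :
  (\sum_(b : bool) \sum_(x : 'I_m)
     ((r (if b then ordS x else x) == i') && (sd (+) b == p)))%N
  = (\sum_(x : 'I_m) (r x == i'))%N.
Proof.
rewrite big_bool /= (reindex_inj (@ord_pred_inj m)) /=.
under eq_bigr do rewrite ord_predK.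
rewrite -big_split; apply: eq_bigr => x _.
by case: sd; case: p; case: (r x == i').
Qed.

Lemma cyc_cnt_row2 m n (r : 'I_m -> 'I_n) i' :
  (\sum_(b : bool) \sum_(x : 'I_m) (r (if b then ordS x else x) == i'))%N
  = (2 * \sum_(x : 'I_m) (r x == i'))%N.
Proof.
rewrite big_bool /= (reindex_inj (@ord_pred_inj m)) /=.
under eq_bigr do rewrite ord_predK.
by rewrite mul2n addnn.
Qed.

Lemma cyc_cnt_col m n (c : 'I_m -> 'I_n) (sd p : bool) j' :
  (\sum_(b : bool) \sum_(x : 'I_m) ((c x == j') && (sd (+) b == p)))%N
  = (\sum_(x : 'I_m) (c x == j'))%N.
Proof.
rewrite big_bool /=.
rewrite -big_split; apply: eq_bigr => x _.
by case: sd; case: p; case: (c x == j').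
Qed.

Lemma cyc_cnt_col2 m n (c : 'I_m -> 'I_n) j' :
  (\sum_(b : bool) \sum_(x : 'I_m) (c x == j'))%N
  = (2 * \sum_(x : 'I_m) (c x == j'))%N.
Proof. by rewrite big_bool /= mul2n addnn. Qed.

Notation Yt m := ((bool * bool) * (bool * 'I_m))%type.

Definition Ec m n (r c : bool -> bool -> 'I_m -> 'I_n) (y : Yt m) : cell n :=
  (r y.1.1 y.1.2 (if y.2.1 then ordS y.2.2 else y.2.2), c y.1.1 y.1.2 y.2.2).

Definition wv m (kk : bool -> bool -> 'I_m) (ofs : bool -> bool -> nat) (y : Yt m) : int :=
  sg (y.1.1 (+) y.2.1) *
  (ofs y.1.1 y.1.2 + (2 * jj (kk y.1.1 y.1.2) y.2.2 + 1 + y.2.1))%N%:R.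

Definition Cs m n (r c : bool -> bool -> 'I_m -> 'I_n) sd wh : {set cell n} :=
  [set (r sd wh i, c sd wh i) | i : 'I_m] :|: [set (r sd wh (ordS i), c sd wh i) | i : 'I_m].

Lemma Cs_mem m n (r c : bool -> bool -> 'I_m -> 'I_n) sd wh z :
  reflect (exists x, Ec r c ((sd, wh), x) = z) (z \in Cs r c sd wh).
Proof.
apply: (iffP setUP) => [[]/imsetP[i _ ->]|[[b i] <-]].
- by exists (false, i).
- by exists (true, i).
- by case: b; [right|left]; apply/imsetP; exists i.
Qed.

Lemma Cs_img m n (r c : bool -> bool -> 'I_m -> 'I_n) sd :
  Cs r c sd false :|: Cs r c sd true = [set Ec r c y | y in [set y : Yt m | y.1.1 == sd]].
Proof.
apply/setP => z; apply/setUP/imsetP.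
  by case=> /Cs_mem[x <-]; [exists ((sd, false), x) | exists ((sd, true), x)]; rewrite ?inE.
case=> -[[sd' wh] x]; rewrite inE /= => /eqP -> ->.
by case: wh; [right|left]; apply/Cs_mem; exists x.
Qed.

Lemma S_img m n (r c : bool -> bool -> 'I_m -> 'I_n) :
  (Cs r c false false :|: Cs r c false true) :|: (Cs r c true false :|: Cs r c true true)
  = [set Ec r c y | y : Yt m].
Proof.
rewrite !Cs_img; apply/setP => z; apply/setUP/imsetP.
  by case=> /imsetP[y _ ->]; exists y.
case=> -[[sd wh] x] _ ->.
by case: sd; [right|left]; apply/imsetP; [exists ((true, wh), x)|exists ((false, wh), x)]; rewrite ?inE.
Qed.

Lemma Ec_inj m n (r c : bool -> bool -> 'I_m -> 'I_n) :
  (1 < m)%N -> (forall sd wh, injective (r sd wh)) -> (forall sd wh, injective (c sd wh)) ->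
  [disjoint Cs r c false false & Cs r c false true] ->
  [disjoint Cs r c true false & Cs r c true true] ->
  [disjoint (Cs r c false false :|: Cs r c false true) & (Cs r c true false :|: Cs r c true true)] ->
  injective (Ec r c).
Proof.
move=> m1 ri ci d1 d2 d12.
have D : forall z sd wh sd' wh', z \in Cs r c sd wh -> z \in Cs r c sd' wh' ->
    (sd, wh) = (sd', wh').
  move=> z sd wh sd' wh' h1 h2.
  have E1 : z \in Cs r c false false :|: Cs r c false true ->
            z \in Cs r c true false :|: Cs r c true true -> False.
    by move=> a b; rewrite (disjointFr d12 a) in b.
  case: sd wh sd' wh' h1 h2 => [] [] [] [] h1 h2 //.
  all: try by rewrite (disjointFr d1 h1) in h2.
  all: try by rewrite (disjointFr d1 h2) in h1.
  all: try by rewrite (disjointFr d2 h1) in h2.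
  all: try by rewrite (disjointFr d2 h2) in h1.
  all: try by exfalso; apply: E1; rewrite in_setU ?h1 ?h2 ?orbT.
move=> [[sd wh] [b i]] [[sd' wh'] [b' i']] H.
have h1 : Ec r c ((sd, wh), (b, i)) \in Cs r c sd wh by apply/Cs_mem; exists (b, i).
have h2 : Ec r c ((sd', wh'), (b', i')) \in Cs r c sd' wh' by apply/Cs_mem; exists (b', i').
rewrite H in h1; case: (D _ _ _ _ _ h1 h2) => e1 e2; subst sd' wh'.
clear h1 h2; move: H; rewrite /Ec /= => -[/ri Hr /ci Hc]; subst i'.
case: b b' Hr => [] [] // Hr.
- by move: (ordS_neq i m1); rewrite Hr eqxx.
- by move: (ordS_neq i m1); rewrite -Hr eqxx.
Qed.

Definition rho m n (r : 'I_m -> 'I_n) i' : nat := (\sum_(x : 'I_m) (r x == i'))%N.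

Lemma sumY (R : Type) (idx : R) (op : Monoid.com_law idx) m (F : Yt m -> R) :
  \big[op/idx]_y F y = \big[op/idx]_(sd : bool) \big[op/idx]_(wh : bool)
     \big[op/idx]_(b : bool) \big[op/idx]_(x : 'I_m) F ((sd, wh), (b, x)).
Proof.
rewrite sum_pair sum_pair; apply: eq_bigr => sd _; apply: eq_bigr => wh _.
by rewrite sum_pair.
Qed.

Lemma sumYn m (F : Yt m -> nat) :
  (\sum_y F y = \sum_(sd : bool) \sum_(wh : bool) \sum_(b : bool) \sum_(x : 'I_m) F ((sd, wh), (b, x)))%N.
Proof. exact: sumY. Qed.

Lemma sumYz m (F : Yt m -> int) :
  \sum_y F y = \sum_(sd : bool) \sum_(wh : bool) \sum_(b : bool) \sum_(x : 'I_m) F ((sd, wh), (b, x)).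
Proof. exact: sumY. Qed.

Lemma rowY m n (r c : bool -> bool -> 'I_m -> 'I_n) kk ofs i' : (0 < m)%N ->
  \sum_(y | (Ec r c y).1 == i') wv kk ofs y =
  \sum_(sd : bool) \sum_(wh : bool)
    sg sd * ((rho (r sd wh) i')%:R - (2 * m * (r sd wh (kk sd wh) == i'))%N%:R).
Proof.
move=> m0; rewrite big_mkcond sumYz; apply: eq_bigr => sd _; apply: eq_bigr => wh _.
by rewrite -(cyc_row (r sd wh) (kk sd wh) (ofs sd wh) sd i' m0).
Qed.

Lemma colY m n (r c : bool -> bool -> 'I_m -> 'I_n) kk ofs j' :
  \sum_(y | (Ec r c y).2 == j') wv kk ofs y =
  \sum_(sd : bool) \sum_(wh : bool) - (sg sd * (rho (c sd wh) j')%:R).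
Proof.
rewrite big_mkcond sumYz; apply: eq_bigr => sd _; apply: eq_bigr => wh _.
by rewrite -(cyc_col (c sd wh) (kk sd wh) (ofs sd wh) sd j').
Qed.

Lemma card_sum (T : finType) (P : pred T) : #|[set y | P y]| = (\sum_y (P y : nat))%N.
Proof.
rewrite -sum1_card big_mkcond; apply: eq_bigr => y _; rewrite inE; by case: (P y).
Qed.

Lemma cntY_row m n (r c : bool -> bool -> 'I_m -> 'I_n) (p : bool) i' :
  #|[set y : Yt m | ((Ec r c y).1 == i') && (y.1.1 (+) y.2.1 == p)]| =
  (\sum_(sd : bool) \sum_(wh : bool) rho (r sd wh) i')%N.
Proof.
rewrite card_sum sumYn; apply: eq_bigr => sd _; apply: eq_bigr => wh _.
by rewrite /rho -(cyc_cnt_row (r sd wh) sd p i').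
Qed.

Lemma cntY_col m n (r c : bool -> bool -> 'I_m -> 'I_n) (p : bool) j' :
  #|[set y : Yt m | ((Ec r c y).2 == j') && (y.1.1 (+) y.2.1 == p)]| =
  (\sum_(sd : bool) \sum_(wh : bool) rho (c sd wh) j')%N.
Proof.
rewrite card_sum sumYn; apply: eq_bigr => sd _; apply: eq_bigr => wh _.
by rewrite /rho -(cyc_cnt_col (c sd wh) sd p j').
Qed.

Lemma big_bool1 (G : bool -> nat) b0 :
  (forall b, b != b0 -> G b = 0%N) -> (\sum_(b : bool) G b = G b0)%N.
Proof.
move=> H; rewrite big_bool; case: b0 in H *.
  by rewrite (H false) //= addn0.
by rewrite (H true) //= add0n.
Qed.

Lemma side_row m n (r c : bool -> bool -> 'I_m -> 'I_n) sd i' :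
  #|[set y : Yt m | (y.1.1 == sd) && ((Ec r c y).1 == i')]| =
  (2 * (rho (r sd false) i' + rho (r sd true) i'))%N.
Proof.
rewrite card_sum sumYn (@big_bool1 _ sd); last first.
  move=> sd' /negbTE ne; apply: big1 => wh _; apply: big1 => b _; apply: big1 => x _.
  by rewrite /= ne.
rewrite big_bool mulnDr addnC; congr (_ + _).
  rewrite -(cyc_cnt_row2 (r sd true) i'); apply: eq_bigr => b _; apply: eq_bigr => x _.
  by rewrite /= eqxx.
rewrite -(cyc_cnt_row2 (r sd false) i'); apply: eq_bigr => b _; apply: eq_bigr => x _.
by rewrite /= eqxx.
Qed.

Lemma side_col m n (r c : bool -> bool -> 'I_m -> 'I_n) sd j' :
  #|[set y : Yt m | (y.1.1 == sd) && ((Ec r c y).2 == j')]| =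
  (2 * (rho (c sd false) j' + rho (c sd true) j'))%N.
Proof.
rewrite card_sum sumYn (@big_bool1 _ sd); last first.
  move=> sd' /negbTE ne; apply: big1 => wh _; apply: big1 => b _; apply: big1 => x _.
  by rewrite /= ne.
rewrite big_bool mulnDr addnC; congr (_ + _).
  rewrite -(cyc_cnt_col2 (c sd true) j'); apply: eq_bigr => b _; apply: eq_bigr => x _.
  by rewrite /= eqxx.
rewrite -(cyc_cnt_col2 (c sd false) j'); apply: eq_bigr => b _; apply: eq_bigr => x _.
by rewrite /= eqxx.
Qed.

Lemma abs_sg (b : bool) (k : nat) : absz (sg b * k%:R) = k.
Proof. by case: b; rewrite /sg ?expr1 ?expr0 ?mulN1r ?mul1r ?abszN natz. Qed.

Lemma abs_wv m (kk : bool -> bool -> 'I_m) ofs y :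
  absz (wv kk ofs y) = (ofs y.1.1 y.1.2 + (2 * jj (kk y.1.1 y.1.2) y.2.2 + 1 + y.2.1))%N.
Proof. by rewrite /wv abs_sg. Qed.

Definition blocks4 n (ofs : bool -> bool -> nat) :=
  block (ofs false false) n ++ block (ofs false true) n ++ block (ofs true false) n ++ block (ofs true true) n.

Lemma in_block x n l : (1 <= l <= n)%N -> (x + l)%N \in block x n.
Proof. by move=> h; apply/map_f; rewrite mem_iota; lia. Qed.

Lemma absY m n (kk : bool -> bool -> 'I_m) ofs :
  n = (2 * m)%N ->
  (forall a b a' b', (a, b) != (a', b') -> (ofs a b + n < ofs a' b' \/ ofs a' b' + n < ofs a b)%N) ->
  perm_eq [seq absz (wv kk ofs y) | y <- enum {: Yt m}] (blocks4 n ofs).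
Proof.
move=> hn sep.
set s1 := [seq _ | y <- _].
have u1 : uniq s1.
  rewrite map_inj_uniq ?enum_uniq // => -[[a b] [e i]] [[a' b'] [e' i']].
  rewrite !abs_wv /=.
  have hj := jj_lt (kk a b) i; have hj' := jj_lt (kk a' b') i'.
  case: (eqVneq (a, b) (a', b')) => [[<- <-]|ne]; last first.
    by case: (sep _ _ _ _ ne); case: e; case: e'; lia.
  move=> h; have : (2 * jj (kk a b) i + e = 2 * jj (kk a b) i' + e')%N by lia.
  clear h => h2; have ee : e = e' by case: e e' h2 => [] [] //=; lia.
  subst e'; have : jj (kk a b) i = jj (kk a b) i' by lia.
  by move/jj_inj => ->.
have sub : {subset s1 <= blocks4 n ofs}.
  move=> z /mapP[[[a b] [e i]] _ ->]; rewrite abs_wv /=.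
  have hj := jj_lt (kk a b) i.
  have hb : (1 <= 2 * jj (kk a b) i + 1 + e <= n)%N by case: e; lia.
  rewrite /blocks4 !mem_cat.
  by clear hj; case: a hb; case: b => hb; rewrite in_block ?orbT.
have sz : size (blocks4 n ofs) = size s1.
  by rewrite /s1 size_map -cardT !card_prod !card_bool card_ord /blocks4 !size_cat !size_map !size_iota; lia.
have [_ eqs] := uniq_min_size u1 sub (eq_leq sz).
apply: uniq_perm => //.
by rewrite (uniq_size_uniq u1 eqs) sz.
Qed.

Lemma sg_pos (p : bool) (k : nat) : (0 < k)%N -> (0 < sg p * k%:R) = ~~ p.
Proof. by case: p; rewrite /sg ?expr1 ?expr0 ?mulN1r ?mul1r /= => h; lia. Qed.

Lemma sg_neg (p : bool) (k : nat) : (0 < k)%N -> (sg p * k%:R < 0) = p.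
Proof. by case: p; rewrite /sg ?expr1 ?expr0 ?mulN1r ?mul1r /= => h; lia. Qed.

Lemma card_img_filter (Y : finType) n (E : Y -> cell n) (Z : {set Y}) (P : pred (cell n)) :
  injective E -> #|[set x in [set E y | y in Z] | P x]| = #|[set y in Z | P (E y)]|.
Proof.
move=> Ei; rewrite -(card_imset _ Ei); apply: eq_card => x; rewrite !inE.
apply/andP/imsetP => [[/imsetP[y hy ->] hp]|[y]]; first by exists y; rewrite // inE hy.
by rewrite inE => /andP[hy hp] ->; split => //; apply: imset_f.
Qed.

Lemma construct m n (r c : bool -> bool -> 'I_m -> 'I_n) (kk : bool -> bool -> 'I_m)
  (ofs : bool -> bool -> nat) :
  (1 < m)%N -> n = (2 * m)%N ->
  (forall sd wh, injective (r sd wh)) -> (forall sd wh, injective (c sd wh)) ->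
  [disjoint Cs r c false false & Cs r c false true] ->
  [disjoint Cs r c true false & Cs r c true true] ->
  [disjoint (Cs r c false false :|: Cs r c false true) & (Cs r c true false :|: Cs r c true true)] ->
  two_factor (Cs r c false false :|: Cs r c false true) ->
  two_factor (Cs r c true false :|: Cs r c true true) ->
  (forall wh, r true wh (kk true wh) = r false wh (kk false wh)) ->
  (forall a b a' b', (a, b) != (a', b') -> (ofs a b + n < ofs a' b' \/ ofs a' b' + n < ofs a b)%N) ->
  exists A : 'M[int]_n,
    [/\ (forall i j, (A i j != 0%R) =
           ((i, j) \in (Cs r c false false :|: Cs r c false true) :|: (Cs r c true false :|: Cs r c true true))),
        shiftable A,
        perm_eq (abs_entries A ((Cs r c false false :|: Cs r c false true) :|: (Cs r c true false :|: Cs r c true true)))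
                (blocks4 n ofs),
        (forall i : 'I_n, (\sum_(j < n) A i j)%R = 0%R) &
        (forall j : 'I_n, (\sum_(i < n) A i j)%R = 0%R)].
Proof.
move=> m1 hn ri ci d1 d2 d12 [tf1r tf1c] [tf2r tf2c] hw sep.
have Ei := Ec_inj m1 ri ci d1 d2 d12.
have m0 : (0 < m)%N by lia.
exists (mkA (Ec r c) (wv kk ofs)); rewrite S_img.
have wpos : forall y, (0 < absz (wv kk ofs y))%N by move=> y; rewrite abs_wv; lia.
have rhoR : forall sd i, (rho (r sd false) i + rho (r sd true) i = 1)%N.
  move=> sd i.
  have h : #|[set x in Cs r c sd false :|: Cs r c sd true | x.1 == i]| = 2.
    by case: sd; [exact: tf2r | exact: tf1r].
  move: h; rewrite Cs_img card_img_filter // => h.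
  have : (2 * (rho (r sd false) i + rho (r sd true) i) = 2)%N.
    rewrite -(side_row r c); apply: (etrans _ h); apply: eq_card => y; by rewrite !inE.
  lia.
have rhoC : forall sd i, (rho (c sd false) i + rho (c sd true) i = 1)%N.
  move=> sd i.
  have h : #|[set x in Cs r c sd false :|: Cs r c sd true | x.2 == i]| = 2.
    by case: sd; [exact: tf2c | exact: tf1c].
  move: h; rewrite Cs_img card_img_filter // => h.
  have : (2 * (rho (c sd false) i + rho (c sd true) i) = 2)%N.
    rewrite -(side_col r c); apply: (etrans _ h); apply: eq_card => y; by rewrite !inE.
  lia.
have posE : forall y, (0 < wv kk ofs y) = (y.1.1 (+) y.2.1 == false).
  by move=> y; rewrite /wv sg_pos; [case: (_ (+) _) | lia].
have negE : forall y, (wv kk ofs y < 0) = (y.1.1 (+) y.2.1 == true).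
  by move=> y; rewrite /wv sg_neg; [case: (_ (+) _) | lia].
split.
- move=> i j; case: (mkA_cases (wv kk ofs) i j Ei) => [[y Ey ->]|[ny ->]].
    rewrite -Ey imset_f //; apply/eqP => h; move: (wpos y); by rewrite h.
  rewrite eqxx; apply/esym/negbTE/imsetP => -[y _ Ey]; by move: (ny y); rewrite Ey eqxx.
- split=> [i|j].
    rewrite (@mkA_card_row _ _ _ _ (fun x : int => 0 < x) i) //.
    rewrite (@mkA_card_row _ _ _ _ (fun x : int => x < 0) i) //.
    have -> : [set y | ((Ec r c y).1 == i) && (0 < wv kk ofs y)] =
              [set y | ((Ec r c y).1 == i) && (y.1.1 (+) y.2.1 == false)].
      by apply/setP => y; rewrite !inE posE.
    have -> : [set y | ((Ec r c y).1 == i) && (wv kk ofs y < 0)] =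
              [set y | ((Ec r c y).1 == i) && (y.1.1 (+) y.2.1 == true)].
      by apply/setP => y; rewrite !inE negE.
    by rewrite !cntY_row.
  rewrite (@mkA_card_col _ _ _ _ (fun x : int => 0 < x) j) //.
  rewrite (@mkA_card_col _ _ _ _ (fun x : int => x < 0) j) //.
  have -> : [set y | ((Ec r c y).2 == j) && (0 < wv kk ofs y)] =
            [set y | ((Ec r c y).2 == j) && (y.1.1 (+) y.2.1 == false)].
    by apply/setP => y; rewrite !inE posE.
  have -> : [set y | ((Ec r c y).2 == j) && (wv kk ofs y < 0)] =
            [set y | ((Ec r c y).2 == j) && (y.1.1 (+) y.2.1 == true)].
    by apply/setP => y; rewrite !inE negE.
  by rewrite !cntY_col.
- exact: perm_trans (mkA_abs _ Ei) (absY kk hn sep).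
- move=> i; rewrite mkA_row rowY // !big_bool /= !hw.
  rewrite /sg expr1 expr0; have := rhoR false i; have := rhoR true i; lia.
- move=> j; rewrite mkA_col colY // !big_bool /= /sg expr1 expr0.
  have := rhoC false j; have := rhoC true j; lia.
Qed.

Definition cyc m n (r c : 'I_m -> 'I_n) : {set cell n} :=
  [set (r i, c i) | i : 'I_m] :|: [set (r (ordS i), c i) | i : 'I_m].

Lemma row_cover m n (ra ca rb cb : 'I_m -> 'I_n) :
  two_factor (cyc ra ca :|: cyc rb cb) ->
  forall i, (exists k, ra k = i) \/ (exists k, rb k = i).
Proof.
move=> [tr _] i; have : (0 < #|[set x in cyc ra ca :|: cyc rb cb | x.1 == i]|)%N by rewrite tr.
case/card_gt0P => x; rewrite !inE => /andP[hx /eqP hi].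
move: hx => /orP[]/orP[]/imsetP[k _ ex]; subst x; rewrite /= in hi.
- by left; exists k.
- by left; exists (ordS k).
- by right; exists k.
- by right; exists (ordS k).
Qed.

Lemma main_aux m (r0 c0 r1 c1 r2 c2 r3 c3 : 'I_m -> 'I_(2 * m)) (k0 k1 k2 k3 : 'I_m)
  (s t u v : nat) :
  (1 < m)%N ->
  injective r0 -> injective c0 -> injective r1 -> injective c1 ->
  injective r2 -> injective c2 -> injective r3 -> injective c3 ->
  [disjoint cyc r0 c0 & cyc r1 c1] -> [disjoint cyc r2 c2 & cyc r3 c3] ->
  [disjoint (cyc r0 c0 :|: cyc r1 c1) & (cyc r2 c2 :|: cyc r3 c3)] ->
  two_factor (cyc r0 c0 :|: cyc r1 c1) -> two_factor (cyc r2 c2 :|: cyc r3 c3) ->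
  r2 k2 = r0 k0 -> r3 k3 = r1 k1 ->
  (t + 2 * m < s)%N -> (u + 2 * m < t)%N -> (v + 2 * m < u)%N ->
  exists A : 'M[int]_(2 * m),
    [/\ (forall i j, (A i j != 0%R) = ((i, j) \in (cyc r0 c0 :|: cyc r1 c1) :|: (cyc r2 c2 :|: cyc r3 c3))),
        shiftable A,
        perm_eq (abs_entries A ((cyc r0 c0 :|: cyc r1 c1) :|: (cyc r2 c2 :|: cyc r3 c3)))
                (block s (2 * m) ++ block t (2 * m) ++ block u (2 * m) ++ block v (2 * m)),
        (forall i : 'I_(2 * m), (\sum_(j < 2 * m) A i j)%R = 0%R) &
        (forall j : 'I_(2 * m), (\sum_(i < 2 * m) A i j)%R = 0%R)].
Proof.
move=> m1 i0 j0 i1 j1 i2 j2 i3 j3 d1 d2 d12 tf1 tf2 w0 w1 h1 h2 h3.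
pose r (sd wh : bool) := if sd then (if wh then r3 else r2) else (if wh then r1 else r0).
pose c (sd wh : bool) := if sd then (if wh then c3 else c2) else (if wh then c1 else c0).
pose kk (sd wh : bool) := if sd then (if wh then k3 else k2) else (if wh then k1 else k0).
pose ofs (sd wh : bool) := if sd then (if wh then v else u) else (if wh then t else s).
case: (@construct m (2 * m) r c kk ofs m1 erefl).
- by move=> [] [].
- by move=> [] [].
- exact: d1.
- exact: d2.
- exact: d12.
- exact: tf1.
- exact: tf2.
- by case; [exact: w1 | exact: w0].
- by move=> [] [] [] [] /=; lia.
move=> A HA; exists A; exact: HA.
Qed.

Local Close Scope ring_scope.
Unset Implicit Arguments.

Theorem lemma2p4 (n : nat) (S1 S2 : {set cell n}) (s t u v : nat) :
  ~~ odd n ->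
  [disjoint S1 & S2] ->
  two_factor_two_ncycles S1 ->
  two_factor_two_ncycles S2 ->
  0 < s -> 0 < t -> 0 < u -> 0 < v ->
  t + n < s -> u + n < t -> v + n < u ->
  exists A : 'M[int]_n,
    [/\ (forall i j, (A i j != 0%R) = ((i, j) \in S1 :|: S2)),
        shiftable A,
        perm_eq (abs_entries A (S1 :|: S2))
                (block s n ++ block t n ++ block u n ++ block v n),
        (forall i : 'I_n, (\sum_(j < n) A i j)%R = 0%R) &
        (forall j : 'I_n, (\sum_(i < n) A i j)%R = 0%R)].
Proof.
move=> _ dS [tf1 [C1 [C2 [cy1 cy2 dC eS1]]]] [tf2 [D1 [D2 [cy3 cy4 dD eS2]]]] _ _ _ _ hs ht hu.
case: cy1 => m [ra [ca [hm hn ira ica eC1]]]; subst n.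
case: cy2 => m' [rb [cb [_ hn2 irb icb eC2]]].
have em : m' = m by lia. subst m'.
case: cy3 => m' [rc [cc [_ hn3 irc icc eD1]]].
have em : m' = m by lia. subst m'.
case: cy4 => m' [rd [cd [_ hn4 ird icd eD2]]].
have em : m' = m by lia. subst m'.
have e1 : C1 = cyc ra ca by exact: eC1.
have e2 : C2 = cyc rb cb by exact: eC2.
have e3 : D1 = cyc rc cc by exact: eD1.
have e4 : D2 = cyc rd cd by exact: eD2.
subst S1 S2; rewrite e1 e2 e3 e4 in dS tf1 tf2 dC dD *.
have F12 : forall k0 k1 k2 k3, rc k2 = ra k0 -> rd k3 = rb k1 ->
  exists A : 'M[int]_(2 * m),
    [/\ (forall i j, (A i j != 0%R) = ((i, j) \in (cyc ra ca :|: cyc rb cb) :|: (cyc rc cc :|: cyc rd cd))),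
        shiftable A,
        perm_eq (abs_entries A ((cyc ra ca :|: cyc rb cb) :|: (cyc rc cc :|: cyc rd cd)))
                (block s (2 * m) ++ block t (2 * m) ++ block u (2 * m) ++ block v (2 * m)),
        (forall i : 'I_(2 * m), (\sum_(j < 2 * m) A i j)%R = 0%R) &
        (forall j : 'I_(2 * m), (\sum_(i < 2 * m) A i j)%R = 0%R)].
  move=> k0 k1 k2 k3 w0 w1.
  exact: (main_aux (k0 := k0) (k1 := k1) (k2 := k2) (k3 := k3) hm ira ica irb icb irc icc ird icd dC dD dS tf1 tf2 w0 w1 hs ht hu).
have F21 : forall k0 k1 k2 k3, rd k2 = ra k0 -> rc k3 = rb k1 ->
  exists A : 'M[int]_(2 * m),
    [/\ (forall i j, (A i j != 0%R) = ((i, j) \in (cyc ra ca :|: cyc rb cb) :|: (cyc rc cc :|: cyc rd cd))),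
        shiftable A,
        perm_eq (abs_entries A ((cyc ra ca :|: cyc rb cb) :|: (cyc rc cc :|: cyc rd cd)))
                (block s (2 * m) ++ block t (2 * m) ++ block u (2 * m) ++ block v (2 * m)),
        (forall i : 'I_(2 * m), (\sum_(j < 2 * m) A i j)%R = 0%R) &
        (forall j : 'I_(2 * m), (\sum_(i < 2 * m) A i j)%R = 0%R)].
  move=> k0 k1 k2 k3 w0 w1; rewrite [cyc rc cc :|: _]setUC.
  rewrite setUC in tf2 dS; rewrite disjoint_sym in dD.
  exact: (main_aux (k0 := k0) (k1 := k1) (k2 := k2) (k3 := k3) hm ira ica irb icb ird icd irc icc dC dD dS tf1 tf2 w0 w1 hs ht hu).
have z0 : 'I_m by exists 0%N; lia.
case: (row_cover tf2 (ra z0)) => -[k1 h1].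
- case: (row_cover tf2 (rb z0)) => -[k2 h2].
  + case: (row_cover tf1 (rd z0)) => -[k3 h3].
    * exact: (F21 k3 z0 z0 k2).
    * exact: (F12 z0 k3 k1 z0).
  + exact: (F12 z0 z0 k1 k2).
- case: (row_cover tf2 (rb z0)) => -[k2 h2].
  + exact: (F21 z0 z0 k1 k2).
  + case: (row_cover tf1 (rc z0)) => -[k3 h3].
    * exact: (F12 k3 z0 z0 k2).
    * exact: (F21 z0 k3 k1 z0).
Qed.
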